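(* Let $\mathcal{S}$ be a finite set of states, for each $s\in\mathcal{S}$ let $\mathcal{A}(s)$ be a finite nonempty set of actions, and let $\mathcal{P}:=\{(s,a): s\in\mathcal{S}, a\in\mathcal{A}(s)\}$ be the (finite) set of state-action pairs. Let $\mu,\mu'\in(\mathbb{R}_{>0})^{\mathcal{P}}$ be two fully supported measures on $\mathcal{P}$ and let $\pi(\mu),\pi(\mu')$ be their induced policies. If $\|\mu'-\mu\|_\infty\le \epsilon\,\min(\mu)$ for some $\epsilon<(2|\mathcal{P}|)^{-1}$, then $$\|\pi(\mu')-\pi(\mu)\|_\infty:=\max_{(s,a)\in\mathcal{P}}\bigl|\pi(\mu')(a|s)-\pi(\mu)(a|s)\bigr|\le 4\epsilon.$$
   Context: For a fully supported measure $\mu$ on $\mathcal{P}$, write $\mu(s):=\sum_{a\in\mathcal{A}(s)}\mu(s,a)$; the policy induced by $\mu$ is the randomized policy $\pi(\mu)(a|s):=\mu(s,a)/\mu(s)$ for $(s,a)\in\mathcal{P}$. Here $\min(\mu):=\min_{z\in\mathcal{P}}\mu(z)$, $\|\mu'-\mu\|_\infty:=\max_{z\in\mathcal{P}}|\mu'(z)-\mu(z)|$, and $|\mathcal{P}|$ is the number of state-action pairs. *)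

(* Defs.v *)
From HB Require Import structures.
From mathcomp Require Import all_boot all_order all_algebra.
Set Implicit Arguments. Unset Strict Implicit. Unset Printing Implicit Defensive.
Import Order.TTheory GRing.Theory Num.Theory.
Local Open Scope ring_scope.

Definition pairs (S : finType) (A : S -> finType) : finType := {s : S & A s}.

Section Defs.
Variables (R : realFieldType) (S : finType) (A : S -> finType).

Definition state_mass (mu : pairs A -> R) (s : S) : R :=
  \sum_(a : A s) mu (Tagged A a).

Definition induced_policy (mu : pairs A -> R) (z : pairs A) : R :=
  mu z / state_mass mu (tag z).

Definition supnorm (f : pairs A -> R) : R := \big[Num.max/0]_(z : pairs A) `|f z|.

(* min(mu) over P (P nonempty in the theorem; 0 by convention if empty) *)
Definition minmeas (mu : pairs A -> R) : R :=
  match [pick z : pairs A] with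
  | Some z0 => \big[Num.min/mu z0]_(z : pairs A) mu z
  | None => 0
  end.
End Defs.

(* Main.v *)
Require Import Defs.
From mathcomp Require Import all_boot all_order all_algebra.
From mathcomp Require Import ring lra.
Import Order.TTheory GRing.Theory Num.Theory.
Local Open Scope ring_scope.
Lemma key (R: realFieldType) (a a' M M' e : R): 0<a -> 0<M -> 0 < M' -> a <= M -> 0<=e -> e <= 1/2 -> `|a'-a| <= e*a -> `|M'-M| <= e*M -> `|a'/M' - a/M| <= 4*e.
Proof.
move=> a0 M0 M'0 aM e0 e1 /ler_normlP[h1 h2] /ler_normlP[h3 h4].
have -> : a'/M' - a/M = ((a'-a)*M - a*(M'-M)) / (M*M').
  by field; rewrite ?gt_eqF ?M0 ?M'0.
rewrite normrM normfV (gtr0_norm (mulr_gt0 M0 M'0)) ler_pdivrMr ?mulr_gt0 //.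
have H1 : 0 <= e * (M - a) * M by apply: mulr_ge0; [apply: mulr_ge0|]; lra.
have H4 : 0 <= e * M * (M' - M/2).
  apply: mulr_ge0; first by apply: mulr_ge0; lra.
  have : e * M <= M/2 by nra.
  lra.
apply/ler_normlP; split.
- have H2 : 0 <= (a' - a + e * a) * M by apply: mulr_ge0; lra.
  have H3 : 0 <= a * (e*M - (M' - M)) by apply: mulr_ge0; lra.
  nra.
- have H2 : 0 <= (e * a - (a' - a)) * M by apply: mulr_ge0; lra.
  have H3 : 0 <= a * (e*M + (M' - M)) by apply: mulr_ge0; lra.
  nra.
Qed.

Lemma mass_ge (R : realFieldType) (S : finType) (A : S -> finType)
  (mu : pairs A -> R) (mu_pos : forall z, 0 < mu z) (s : S) (a : A s) :
  mu (Tagged A a) <= state_mass mu s.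
Proof.
rewrite /state_mass (bigD1 a) //= lerDl.
by apply: sumr_ge0 => i _; apply: ltW.
Qed.

Theorem mainTheorem1 (R : realFieldType) (S : finType) (A : S -> finType)
  (S_nonempty : (0 < #|S|)%N) (A_nonempty : forall s : S, (0 < #|A s|)%N)
  (mu mu' : pairs A -> R)
  (mu_pos : forall z, 0 < mu z) (mu'_pos : forall z, 0 < mu' z)
  (eps : R) (heps : eps < (2 * #|pairs A|%:R)^-1)
  (hclose : supnorm (fun z => mu' z - mu z) <= eps * minmeas mu) :
  supnorm (fun z => induced_policy mu' z - induced_policy mu z) <= 4 * eps.
Proof.
have [s0 _] := card_gt0P S_nonempty.
have [a0 _] := card_gt0P (A_nonempty s0).
pose z0 : pairs A := Tagged A a0.
set m := minmeas mu in hclose.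
have [mpos mle] : 0 < m /\ forall z, m <= mu z.
  rewrite /m /minmeas; case: pickP => [z1 _|/(_ z0)//].
  split; last by move=> z; apply: bigmin_le.
  apply: (big_ind (fun x => 0 < x)) => // x y hx hy.
  by rewrite lt_min hx hy.
have hsup : forall z, `|mu' z - mu z| <= eps * m.
  move=> z; apply: le_trans hclose.
  exact: (le_bigmax 0 (fun z => `|mu' z - mu z|) z).
have e0 : 0 <= eps.
  have := hsup z0; have := normr_ge0 (mu' z0 - mu z0); nra.
have n1 : 1 <= #|pairs A|%:R :> R.
  rewrite ler1n; apply/card_gt0P; by exists z0.
have e1 : eps <= 1/2.
  move: heps; rewrite -[X in eps < X]div1r ltr_pdivlMr; last by lra.
  nra.
apply/bigmax_leP; split; first lra.
move=> [s a] _ /=.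
rewrite /induced_policy /=.
have hM := @mass_ge _ _ _ _ mu_pos _ a.
have hM' := @mass_ge _ _ _ _ mu'_pos _ a.
have hmu := mu_pos (Tagged A a).
have hmu' := mu'_pos (Tagged A a).
apply: key => //; try lra.
- apply: le_trans (hsup _) _; apply: ler_wpM2l => //.
- rewrite /state_mass -sumrB; apply: le_trans (ler_norm_sum _ _ _) _.
  rewrite mulr_sumr; apply: ler_sum => i _.
  apply: le_trans (hsup _) _; apply: ler_wpM2l => //.
Qed.
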